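(* For all integers $b\ge2$ and $k\ge0$, $$\alpha_k(\mathbb{Z},b)=\sum_{i=1}^\infty\left\lfloor\frac{k}{b^i}\right\rfloor,$$ and for $k=0,1,2,\dots$, $$k!_{\mathbb{Z},\mathbb{N}}=\prod_{b=2}^k b^{\alpha_k(\mathbb{Z},b)}.$$
   Context: $\mathbb{N}=\{0,1,2,\dots\}$. For an integer $b\ge0$ and $a\in\mathbb{Z}$ define $\operatorname{ord}_b(a):=\sup\{k\in\mathbb{N}: a\mathbb{Z}\subseteq b^k\mathbb{Z}\}$ (convention $0^0=1$); thus for $b\ge2$ it is the largest $k$ with $b^k\mid a$ ($+\infty$ for $a=0$), $\operatorname{ord}_0(a)=+\infty$ if $a=0$ and $0$ otherwise, and $\operatorname{ord}_1(a)=+\infty$. For nonempty $S\subseteq\mathbb{Z}$, a $b$-ordering of $S$ is a sequence $(a_i)_{i\ge0}$ in $S$ such that for each $i\ge1$, $a_i$ attains $\min_{a'\in S}\sum_{j=0}^{i-1}\operatorname{ord}_b(a'-a_j)$; the $b$-exponent sequence is $\alpha_k(S,b):=\sum_{j=0}^{k-1}\operatorname{ord}_b(a_k-a_j)$ for any $b$-ordering (independent of the choice). For $\mathcal{T}\subseteq\mathbb{N}$ the generalized factorial is $k!_{S,\mathcal{T}}:=\prod_{b\in\mathcal{T}}b^{\alpha_k(S,b)}$, with conventions $b^{+\infty}=0$ for $b=0$ and $b\ge2$, $1^{+\infty}=1$, and $b^0=1$ for all $b\in\mathbb{N}$. *)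

(* Defs.v *)
From mathcomp Require Import all_boot all_order all_algebra.
From Stdlib Require Import ClassicalEpsilon.
Set Implicit Arguments. Unset Strict Implicit. Unset Printing Implicit Defensive.
Import Order.TTheory GRing.Theory Num.Theory.

(* Extended naturals N ∪ {+oo}: [Some n] is n, [None] is +oo. *)
Definition enat := option nat.

Definition eadd (x y : enat) : enat :=
  match x, y with Some m, Some n => Some (m + n)%N | _, _ => None end.

Definition ele (x y : enat) : Prop :=
  match x, y with
  | _, None => True
  | None, Some _ => False
  | Some m, Some n => (m <= n)%N
  end.

(* ord_b(a) = sup{k in N : aZ ⊆ b^k Z}, computed case by case:
   b = 0 : +oo if a = 0, else 0;   b = 1 : +oo;
   b >= 2: +oo if a = 0, else the largest k with b^k | a. *)
Definition ord (b : nat) (a : int) : enat :=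
  match b with
  | 0 => if a == 0%R then None else Some 0%N
  | 1 => None
  | _ => if a == 0%R then None
         else Some (\max_(k < `|a|%N.+1 | (b ^ k %| `|a|%N)%N) (k : nat))
  end.

Definition osum (b : nat) (a : nat -> int) (i : nat) (x : int) : enat :=
  \big[eadd/Some 0%N]_(j < i) ord b (x - a j)%R.

Definition b_ordering (S : int -> Prop) (b : nat) (a : nat -> int) : Prop :=
  (forall i, S (a i)) /\
  (forall i, (1 <= i)%N -> forall a', S a' -> ele (osum b a i (a i)) (osum b a i a')).

(* alpha_k(S,b), computed from some (chosen) b-ordering; the value is
   independent of the choice (a fact from the paper, not used as a definition).
   If no b-ordering exists, a junk value +oo is returned. *)
Definition alpha (S : int -> Prop) (b k : nat) : enat :=
  match excluded_middle_informative (exists a, b_ordering S b a) with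
  | left H => let a := proj1_sig (constructive_indefinite_description _ H) in
              osum b a k (a k)
  | right _ => None
  end.

Definition epow (b : nat) (x : enat) : nat :=
  match x with Some n => (b ^ n)%N | None => if b == 1%N then 1%N else 0%N end.

(* Product over b in T of f b, when only finitely many factors differ from 1:
   s is a duplicate-free finite list of elements of T containing every b in T
   with f b <> 1. *)
Definition fin_support (T : nat -> Prop) (f : nat -> nat) (s : seq nat) : Prop :=
  uniq s /\ (forall b, b \in s -> T b) /\ (forall b, T b -> f b <> 1%N -> b \in s).

Definition tprod (T : nat -> Prop) (f : nat -> nat) : nat :=
  match excluded_middle_informative (exists s, fin_support T f s) with
  | left H => \prod_(b <- proj1_sig (constructive_indefinite_description _ H)) f b
  | right _ => 0%N
  end.

Definition genfact (S : int -> Prop) (T : nat -> Prop) (k : nat) : nat :=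
  tprod T (fun b => epow b (alpha S b k)).

Definition setZ : int -> Prop := fun _ => True.
Definition setN : nat -> Prop := fun _ => True.

(* Main.v *)
Require Import Defs.
From HB Require Import structures.
From Stdlib Require Import ClassicalEpsilon.
From mathcomp Require Import all_boot all_order all_algebra zify ring lra.
Set Implicit Arguments. Unset Strict Implicit. Unset Printing Implicit Defensive.
Import Order.TTheory GRing.Theory Num.Theory.

Definition vv (b : nat) (d : int) : nat :=
  \max_(k < `|d|%N.+1 | (b ^ k %| `|d|%N)%N) (k : nat).

Lemma ord_eq b d : 1 < b -> d != 0%R -> ord b d = Some (vv b d).
Proof. by case: b => [|[|b]] // _ hd; rewrite /ord (negbTE hd). Qed.

Lemma ord_eq0 b : 1 < b -> ord b 0%R = None.
Proof. by case: b => [|[|b]]. Qed.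

Lemma vv_dvd b d i : 1 < b -> d != 0%R -> (b ^ i %| `|d|%N) = (i <= vv b d).
Proof.
move=> hb hd.
have n0 : 0 < `|d|%N by rewrite absz_gt0.
have P0 : (b ^ (@ord0 `|d|%N) %| `|d|%N) by rewrite expn0 dvd1n.
have Pv : (b ^ vv b d %| `|d|%N).
  rewrite /vv (bigop.bigmax_eq_arg _ P0).
  by case: arg_maxnP.
apply/idP/idP => H.
  have hi : i < `|d|%N.+1.
    rewrite ltnS; apply: leq_trans (ltnW (ltn_expl i hb)) _; exact: dvdn_leq.
  exact: (@leq_bigmax_cond _ (fun k : 'I_`|d|%N.+1 => b ^ k %| `|d|%N) (fun k => nat_of_ord k) (Ordinal hi)).
apply: dvdn_trans Pv; exact: dvdn_exp2l.
Qed.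

Lemma sum_le_n v L : v < L -> \sum_(1 <= i < L) (i <= v) = v.
Proof.
move=> hL.
rewrite (@big_cat_nat _ _ _ v.+1) //= ?ltnW //.
have -> : \sum_(v.+1 <= i < L) (i <= v) = 0.
  rewrite big_nat_cond big1 // => i /andP[/andP[hi _] _]; by rewrite leqNgt hi.
have -> : \sum_(1 <= i < v.+1) (i <= v) = \sum_(1 <= i < v.+1) 1.
  rewrite big_nat_cond [RHS]big_nat_cond; apply: eq_bigr => i /andP[/andP[_ hi] _].
  by rewrite ltnS in hi; rewrite hi.
by rewrite sum_nat_const_nat subn1 muln1 addn0.
Qed.

Lemma vv_sum b d L : 1 < b -> d != 0%R -> ~~ (b ^ L %| `|d|%N) ->
  vv b d = \sum_(1 <= i < L) (b ^ i %| `|d|%N).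
Proof.
move=> hb hd hL.
rewrite [RHS](eq_bigr (fun i => nat_of_bool (i <= vv b d))); last by move=> i _; rewrite vv_dvd.
rewrite sum_le_n //. rewrite ltnNge -vv_dvd //.
Qed.

Lemma nodvd b d N : 1 < b -> d != 0%R -> `|d|%N < N -> ~~ (b ^ N %| `|d|%N).
Proof.
move=> hb hd hN; apply/negP => H.
have n0 : 0 < `|d|%N by rewrite absz_gt0.
have h := dvdn_leq n0 H.
have := ltn_expl N hb. lia.
Qed.

Lemma eaddA : associative eadd.
Proof. by case=> [x|] [y|] [z|] //=; rewrite addnA. Qed.
Lemma eaddC : commutative eadd.
Proof. by case=> [x|] [y|] //=; rewrite addnC. Qed.
Lemma eadd0e : left_id (Some 0) eadd.
Proof. by case. Qed.
HB.instance Definition _ := Monoid.isComLaw.Build enat (Some 0) eadd eaddA eaddC eadd0e.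

Lemma bigeadd_some k (F : nat -> enat) (g : nat -> nat) :
  (forall j, j < k -> F j = Some (g j)) ->
  \big[eadd/Some 0]_(j < k) F j = Some (\sum_(j < k) g j).
Proof.
elim: k => [|k IH] H; first by rewrite !big_ord0.
rewrite !big_ord_recr /= IH ?H //; move=> j hj; apply: H; exact: ltnW.
Qed.

Lemma bigeadd_none k (F : nat -> enat) j0 :
  j0 < k -> F j0 = None -> \big[eadd/Some 0]_(j < k) F j = None.
Proof.
move=> hj hF; rewrite (bigD1 (Ordinal hj)) //= hF.
by case: (\big[eadd/Some 0]_(i < k | i != Ordinal hj) F i).
Qed.

Definition cnt (a : nat -> int) (k m : nat) (x : int) : nat :=
  \sum_(j < k) ((m%:Z %| (x - a j)%R)%Z : nat).

Lemma dvdz_sh (m u v : int) : (m %| u)%Z -> (m %| (u + v)%R)%Z = (m %| v)%Z.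
Proof.
move/dvdzP=> [q hu]; apply/idP/idP => /dvdzP [q' h]; apply/dvdzP.
  by exists (q' - q)%R; rewrite mulrBl -h hu; ring.
by exists (q' + q)%R; rewrite mulrDl -h hu; ring.
Qed.

Lemma cnt_class a k m x y : (m%:Z %| (x - y)%R)%Z -> cnt a k m x = cnt a k m y.
Proof.
move=> h; apply: eq_bigr => j _.
congr nat_of_bool.
move/dvdzP: h => [q hq]; apply/idP/idP => /dvdzP [q' h']; apply/dvdzP.
  by exists (q' - q)%R; rewrite mulrBl; lia.
by exists (q' + q)%R; rewrite mulrDl; lia.
Qed.

Lemma cnt_S a k m x : cnt a k.+1 m x = cnt a k m x + (m%:Z %| (x - a k)%R)%Z.
Proof. by rewrite /cnt big_ord_recr. Qed.

Lemma cnt1 a k x : cnt a k 1 x = k.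
Proof.
rewrite /cnt (eq_bigr (fun _ => 1)); last by move=> j _; rewrite dvdzE dvd1n.
by rewrite sum_nat_const card_ord muln1.
Qed.

Lemma cnt0 a m x : cnt a 0 m x = 0.
Proof. by rewrite /cnt big_ord0. Qed.

Lemma small_dvd (b t r : int) : (b %| (t - r)%R)%Z -> (0 <= r < b)%R -> (0 <= t < b)%R -> t = r.
Proof.
move=> H h1 h2; move/dvdzP: H => [q hq].
have [hq0|[hq1|hq1]] : (q = 0 \/ 1 <= q \/ q <= -1)%R by lia.
- by move: hq; rewrite hq0 mul0r; lia.
- have : (b <= q * b)%R by nia. lia.
- have : (q * b <= - b)%R by nia. lia.
Qed.

Lemma children (b m : nat) (d : int) : 0 < b -> 0 < m ->
  \sum_(t < b) (((b * m)%:Z %| (d + (t * m)%:Z)%R)%Z : nat) = (m%:Z %| d)%Z.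
Proof.
move=> hb hm.
case hd: (m%:Z %| d)%Z; last first.
  rewrite big1 // => t _; apply/eqP; rewrite eqn0Ngt lt0b; apply/negP => /dvdzP [q hq].
  move/negbT/negP: hd; apply; apply/dvdzP; exists (q * b%:Z - t%:Z)%R.
  have -> : d = (d + (t * m)%:Z - (t * m)%:Z)%R by ring.
  rewrite hq; rewrite !PoszM; ring.
move/dvdzP: hd => [e ->].
set r := ((- e)%R %% b%:Z)%Z.
have hr : (0 <= r < b%:Z)%R by rewrite /r; lia.
have ht0 : `|r|%N < b by lia.
have hrr : Posz (`|r|%N) = r by lia.
have hq := divz_eq (- e)%R b%:Z.
rewrite -/r in hq; clearbody r.
rewrite (bigD1 (Ordinal ht0)) //= big1 ?addn0.
  have -> : (((b * m)%:Z %| (e * m%:Z + (`|r|%N * m)%:Z)%R)%Z) = true; last by [].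
  apply/dvdzP; exists (- ((- e)%R %/ b%:Z)%Z)%R.
  rewrite PoszM hrr PoszM; nia.
move=> t ht; apply/eqP; rewrite eqn0Ngt lt0b; apply/negP => /dvdzP [q hq'].
have h1 : (e + t%:Z = q * b%:Z)%R.
  apply: (@mulIf _ m%:Z); first by rewrite lt0r_neq0 // ltz_nat.
  rewrite !PoszM in hq'; rewrite mulrDl hq'; ring.
have h2 : (b%:Z %| (t%:Z - r)%R)%Z.
  apply/dvdzP; exists (q + ((- e)%R %/ b%:Z)%Z)%R; lia.
move/negP: ht; apply; apply/eqP/val_inj => /=.
have hb0 : (0 <= t%:Z < b%:Z)%R by move: (ltn_ord t); lia.
have := small_dvd h2 hr hb0. lia.
Qed.

Lemma ind_sum m (r1 : 'I_m) : \sum_(r < m) (r == r1) = 1.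
Proof. by rewrite (bigD1 r1) //= eqxx big1 // => r /negbTE ->. Qed.

Lemma class_sum a k m : 0 < m -> \sum_(r < m) cnt a k m (Posz r) = k.
Proof.
move=> hm; rewrite /cnt exchange_big /=.
rewrite (eq_bigr (fun _ => 1)); last first.
  move=> j _; rewrite -[RHS](_ : nat_of_bool (1%:Z %| (- a j)%R)%Z = 1); last first.
    by rewrite dvdzE dvd1n.
  rewrite -(children (- a j)%R hm (isT : 0 < 1)).
  apply: eq_bigr => r _; rewrite muln1 addrC.
  by rewrite muln1.
by rewrite sum_nat_const card_ord muln1.
Qed.

Lemma dvdz_sub (m x y r : int) : (m %| (x - r)%R)%Z -> (m %| (y - r)%R)%Z -> (m %| (x - y)%R)%Z.
Proof.
move=> /dvdzP [q1 h1] /dvdzP [q2 h2]; apply/dvdzP; exists (q1 - q2)%R.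
rewrite mulrBl; lia.
Qed.

Lemma mod_class (x : int) (m : nat) : 0 < m -> exists r : 'I_m, (m%:Z %| (x - Posz r)%R)%Z.
Proof.
move=> hm.
have hr : `|(x %% m%:Z)%Z|%N < m by lia.
exists (Ordinal hr); apply/dvdzP; exists (x %/ m%:Z)%Z => /=.
have := divz_eq x m%:Z; lia.
Qed.

Definition Inv b a k := forall i x, k %/ b ^ i <= cnt a k (b ^ i) x <= k %/ b ^ i + 1.

Lemma inv0 b a : Inv b a 0.
Proof. by move=> i x; rewrite cnt0 div0n. Qed.

Lemma inv_step b a k : 1 < b -> Inv b a k ->
  (forall i, cnt a k (b ^ i) (a k) = k %/ b ^ i) -> Inv b a k.+1.
Proof.
move=> hb IH Hk i x.
have hm : 0 < b ^ i by rewrite expn_gt0; lia.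
move: (IH i) (Hk i); set m := b ^ i => IHi Hki.
have [q1 q2] := andP (IHi x).
rewrite cnt_S divnS //.
case hx: (m%:Z %| (x - a k)%R)%Z.
  rewrite (cnt_class _ _ hx) Hki. by case: (m %| k.+1); rewrite /=; lia.
case hk1: (m %| k.+1); rewrite /=; last by lia.
case: (ltnP (k %/ m) (cnt a k m x)) => hlt; first by lia.
have hc : cnt a k m x = k %/ m by lia.
have [r1 hr1] := mod_class x hm.
have [r2 hr2] := mod_class (a k) hm.
have hr12 : r1 != r2.
  apply/negP => /eqP e; move/negP: hx; apply; rewrite e in hr1.
  exact: dvdz_sub hr1 hr2.
have c1 : cnt a k m (Posz r1) = k %/ m.
  rewrite -hc; apply: cnt_class.
  move: hr1 => /dvdzP [q h]; apply/dvdzP; exists (- q)%R; lia.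
have c2 : cnt a k m (Posz r2) = k %/ m.
  rewrite -Hki; apply: cnt_class.
  move: hr2 => /dvdzP [q h]; apply/dvdzP; exists (- q)%R; lia.
have hsum : \sum_(r < m) (cnt a k m (Posz r) + (r == r1) + (r == r2)) <= \sum_(r < m) (k %/ m + 1).
  apply: leq_sum => r _.
  case: (eqVneq r r1) => [->|n1].
    by rewrite ?eqxx (negbTE hr12) c1 /= addn0.
  case: (eqVneq r r2) => [->|n2].
    by rewrite ?eqxx c2 /= addn0.
  by rewrite /= !addn0; case/andP: (IH i (Posz r)).
move: hsum; rewrite !big_split /= class_sum // !ind_sum !sum_nat_const !card_ord.
have hk1' := hk1.
move/dvdnP: hk1 => [z hz].
have hz' : z = (k %/ m).+1 by rewrite -(mulnK z hm) -hz divnS // hk1'.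
rewrite hz' in hz. nia.
Qed.

Lemma descent b a k L : 1 < b -> Inv b a k ->
  exists y, forall i, i <= L -> cnt a k (b ^ i) y = k %/ b ^ i.
Proof.
move=> hb hI; elim: L => [|L [y hy]].
  by exists 0%R => i; rewrite leqn0 => /eqP ->; rewrite expn0 cnt1 divn1.
have hb0 : 0 < b by lia.
have hM : 0 < b ^ L by rewrite expn_gt0 hb0.
set q := k %/ b ^ L.+1.
have hch : \sum_(t < b) cnt a k (b ^ L.+1) (y + Posz (t * b ^ L))%R = cnt a k (b ^ L) y.
  rewrite /cnt exchange_big /=; apply: eq_bigr => j _.
  rewrite -(children (y - a j)%R hb0 hM); apply: eq_bigr => t _.
  rewrite expnS; congr (nat_of_bool (dvdz _ _)); ring.
have [t ht|hP] := pickP (fun t : 'I_b => cnt a k (b ^ L.+1) (y + Posz (t * b ^ L))%R <= q).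
  exists (y + Posz (t * b ^ L))%R => i; rewrite leq_eqVlt => /orP [/eqP ->|hi].
    by have := hI L.+1 (y + Posz (t * b ^ L))%R; rewrite -/q; lia.
  rewrite -hy //; apply: cnt_class.
  have -> : (y + Posz (t * b ^ L) - y = Posz (t * b ^ L))%R by ring.
  rewrite dvdzE /=; apply: dvdn_mull; apply: dvdn_exp2l; lia.
exfalso.
have : \sum_(t < b) (q + 1) <= \sum_(t < b) cnt a k (b ^ L.+1) (y + Posz (t * b ^ L))%R.
  apply: leq_sum => t _; have := hP t; rewrite /= => /negbT; lia.
rewrite hch hy // sum_nat_const card_ord /q expnSr divnMA.
have := divn_eq (k %/ b ^ L) b; have := ltn_pmod (k %/ b ^ L) hb0.
nia.
Qed.

Definition S b k := \sum_(1 <= i < k.+1) k %/ b ^ i.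

Lemma sumq b k N : 1 < b -> k < N -> \sum_(1 <= i < N) k %/ b ^ i = S b k.
Proof.
move=> hb hN; rewrite /S (@big_cat_nat _ _ _ k.+1) //=.
have -> : \sum_(k.+1 <= i < N) k %/ b ^ i = 0; last by rewrite addn0.
rewrite big_nat_cond big1 // => i /andP [/andP [hi _] _].
apply: divn_small; have := ltn_expl i hb; lia.
Qed.

Lemma osum_val b a k x : 1 < b -> (forall j, j < k -> x != a j) ->
  osum b a k x = Some (\sum_(j < k) vv b (x - a j)%R).
Proof.
move=> hb H; rewrite /osum (@bigeadd_some k (fun j => ord b (x - a j)%R) (fun j => vv b (x - a j)%R)) // => j hj.
by apply: ord_eq => //; rewrite subr_eq0 H.
Qed.

Lemma osum_none b a k x j : 1 < b -> j < k -> x = a j -> osum b a k x = None.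
Proof.
move=> hb hj hx; rewrite /osum (@bigeadd_none k (fun j => ord b (x - a j)%R) j) //.
by rewrite /= hx subrr ord_eq0.
Qed.

Lemma osum_cnt b a k x N : 1 < b -> (forall j, j < k -> x != a j) ->
  (forall j, j < k -> ~~ (b ^ N %| `|(x - a j)%R|%N)) ->
  \sum_(j < k) vv b (x - a j)%R = \sum_(1 <= i < N) cnt a k (b ^ i) x.
Proof.
move=> hb H1 H2.
rewrite (eq_bigr (fun j : 'I_k => \sum_(1 <= i < N) (((b ^ i)%:Z %| (x - a j)%R)%Z : nat))).
  by rewrite exchange_big.
move=> j _; apply: vv_sum => //; last exact: H2.
by rewrite subr_eq0 H1.
Qed.

Lemma le_sum_ord (F : nat -> nat) k j : j < k -> F j <= \sum_(i < k) F i.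
Proof. by move=> hj; rewrite (bigD1 (Ordinal hj)) //= leq_addr. Qed.

Lemma lower b a k x : 1 < b -> Inv b a k -> (forall j, j < k -> x != a j) ->
  S b k <= \sum_(j < k) vv b (x - a j)%R.
Proof.
move=> hb hI H.
set N := k.+1 + \sum_(j < k) `|(x - a j)%R|%N.
rewrite (@osum_cnt b a k x N) //; last first.
  move=> j hj; apply: nodvd => //; first by rewrite subr_eq0 H.
  have := le_sum_ord (fun j => `|(x - a j)%R|%N) hj; rewrite /N; lia.
rewrite -(@sumq b k N) //; last by rewrite /N; lia.
by apply: leq_sum => i _; case/andP: (hI i x).
Qed.

Lemma eq_from_sum (r : seq nat) (F G : nat -> nat) :
  (forall i, i \in r -> F i <= G i) -> \sum_(i <- r) G i <= \sum_(i <- r) F i ->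
  forall i, i \in r -> F i = G i.
Proof.
elim: r => [|x r IH] H1 H2 i //.
have hx := H1 x (mem_head _ _).
have H1' : forall j, j \in r -> F j <= G j by move=> j hj; apply: H1; rewrite inE hj orbT.
have hr : \sum_(j <- r) F j <= \sum_(j <- r) G j.
  by rewrite big_seq_cond [X in _ <= X]big_seq_cond; apply: leq_sum => j /andP [hj _]; apply: H1'.
rewrite !big_cons in H2.
rewrite inE => /orP [/eqP ->|hi]; first by lia.
apply: IH => //; lia.
Qed.

Lemma key b a k : 1 < b -> b_ordering setZ b a -> Inv b a k ->
  osum b a k (a k) = Some (S b k) /\ (forall i, cnt a k (b ^ i) (a k) = k %/ b ^ i).
Proof.
move=> hb [_ hord] hI.
case: k hI => [|k] hI.
  split; first by rewrite /osum big_ord0 /S big_geq.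
  by move=> i; rewrite cnt0 div0n.
have [y hy] := descent k.+2 hb hI.
have hy0 : cnt a k.+1 (b ^ k.+2) y = 0.
  rewrite hy // divn_small //; have := ltn_expl k.+2 hb; lia.
have hyn : forall j, j < k.+1 -> ~~ ((b ^ k.+2)%:Z %| (y - a j)%R)%Z.
  move=> j hj; apply/negP => hd; move: hy0; rewrite /cnt (bigD1 (Ordinal hj)) //= hd.
  by [].
have hyne : forall j, j < k.+1 -> y != a j.
  move=> j hj; apply/negP => /eqP e; move: (hyn j hj); by rewrite e subrr dvdz0.
have hoy : osum b a k.+1 y = Some (S b k.+1).
  rewrite osum_val // (@osum_cnt b a k.+1 y k.+2 hb hyne hyn).
  rewrite -(@sumq b k.+1 k.+2) //; congr Some; apply: eq_big_nat => i /andP [_ hi]; rewrite hy //; exact: ltnW.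
have := hord k.+1 isT y I; rewrite hoy.
case hak: (osum b a k.+1 (a k.+1)) => [v|] //= hv.
have hne : forall j, j < k.+1 -> a k.+1 != a j.
  move=> j hj; apply/negP => /eqP e; by rewrite (osum_none hb hj e) in hak.
move: hak; rewrite osum_val // => - [hv'].
have hlow := lower hb hI hne.
split; first by congr Some; apply/eqP; rewrite eqn_leq hv /= -hv'; exact: hlow.
case=> [|i]; first by rewrite expn0 cnt1 divn1.
set N := i.+2 + k.+2 + \sum_(j < k.+1) `|(a k.+1 - a j)%R|%N.
have hN : forall j, j < k.+1 -> ~~ (b ^ N %| `|(a k.+1 - a j)%R|%N).
  move=> j hj; apply: nodvd => //; first by rewrite subr_eq0 hne.
  have := le_sum_ord (fun j => `|(a k.+1 - a j)%R|%N) hj; rewrite /N; lia.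
have hsum := @osum_cnt b a k.+1 (a k.+1) N hb hne hN.
symmetry; apply: (@eq_from_sum (index_iota 1 N) (fun i => k.+1 %/ b ^ i)
   (fun i => cnt a k.+1 (b ^ i) (a k.+1))).
- by move=> l _ /=; case/andP: (hI l (a k.+1)).
- rewrite /= -hsum (@sumq b k.+1 N) //; first by rewrite hv'.
  rewrite /N; lia.
- rewrite mem_index_iota /N; lia.
Qed.

Lemma ordering_val b a : 1 < b -> b_ordering setZ b a ->
  forall k, osum b a k (a k) = Some (S b k).
Proof.
move=> hb ho.
have hI : forall k, Inv b a k.
  elim=> [|k IH]; first exact: inv0.
  by apply: inv_step => //; exact: (key hb ho IH).2.
by move=> k; exact: (key hb ho (hI k)).1.
Qed.

Definition stdseq (j : nat) : int := Posz j.

Lemma cnt_std k m : 0 < m -> cnt stdseq k m (Posz k) = k %/ m.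
Proof.
move=> hm; elim: k => [|k IH]; first by rewrite cnt0 div0n.
rewrite /cnt big_ord_recl /= divnS // -IH /cnt.
congr addn; first by rewrite subr0 dvdzE.
apply: eq_bigr => j _; rewrite /stdseq /bump /=.
congr (nat_of_bool (dvdz _ _)); lia.
Qed.

Lemma inv_std b k : 1 < b -> Inv b stdseq k.
Proof.
move=> hb; elim: k => [|k IH]; first exact: inv0.
apply: inv_step => // i; apply: cnt_std; rewrite expn_gt0; lia.
Qed.

Lemma std_ord b : 1 < b -> b_ordering setZ b stdseq.
Proof.
move=> hb; split => // i hi x _.
have hne : forall j, j < i -> stdseq i != stdseq j.
  by move=> j hj; rewrite /stdseq; apply/eqP => - [e]; lia.
have -> : osum b stdseq i (stdseq i) = Some (S b i).
  rewrite osum_val // (@osum_cnt b stdseq i (stdseq i) i.+1) //; last first.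
    move=> j hj; apply: nodvd => //; first by rewrite subr_eq0 hne.
    rewrite /stdseq; lia.
  congr Some; rewrite /S; apply: eq_big_nat => l _; apply: cnt_std.
  rewrite expn_gt0; lia.
case: (boolP [exists j : 'I_i, x == stdseq j]) => [/existsP [j /eqP hj]|hx].
  by rewrite (osum_none hb (ltn_ord j) hj).
have hx' : forall j, j < i -> x != stdseq j.
  move=> j hj; apply/negP => e; move/negP: hx; apply; apply/existsP.
  by exists (Ordinal hj).
rewrite osum_val //=; exact: lower hb (inv_std i hb) hx'.
Qed.

Lemma alpha_b b k : 1 < b -> alpha setZ b k = Some (S b k).
Proof.
move=> hb; rewrite /alpha; case: excluded_middle_informative => [H|H]; last first.
  by exfalso; apply: H; exists stdseq; exact: std_ord.
case: (constructive_indefinite_description _ H) => a ha /=.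
exact: ordering_val.
Qed.

Lemma osum0_val a k x : (forall j, j < k -> x != a j) -> osum 0 a k x = Some 0.
Proof.
move=> H; rewrite /osum (@bigeadd_some k (fun j => ord 0 (x - a j)%R) (fun _ => 0)).
  by rewrite big1.
by move=> j hj; rewrite /ord subr_eq0 (negbTE (H j hj)).
Qed.

Lemma ele0 z : ele (Some 0) z.
Proof. by case: z. Qed.

Lemma alpha0 k : alpha setZ 0 k = Some 0.
Proof.
rewrite /alpha; case: excluded_middle_informative => [H|H]; last first.
  exfalso; apply: H; exists stdseq; split => // i hi x _.
  rewrite osum0_val; first exact: ele0.
  move=> j hj; rewrite /stdseq; apply/eqP => - [e]; lia.
case: (constructive_indefinite_description _ H) => a [_ ha] /=.
case: k => [|k]; first by rewrite /osum big_ord0.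
set y := Posz (\sum_(j < k.+1) `|a j|%N).+1.
have hy : forall j, j < k.+1 -> y != a j.
  move=> j hj; apply/eqP => e.
  have := le_sum_ord (fun j => `|a j|%N) hj; rewrite /= -e /y /=; lia.
have := ha k.+1 isT y I; rewrite (osum0_val hy).
case: (osum 0 a k.+1 (a k.+1)) => //= v; rewrite leqn0 => /eqP ->.
by [].
Qed.

Lemma epow1 z : epow 1 z = 1.
Proof. by case: z => //= n; rewrite exp1n. Qed.

Lemma f_one b k : (b < 2) || (k < b) -> epow b (alpha setZ b k) = 1.
Proof.
case: b => [|[|b]] hk; first by rewrite alpha0.
  exact: epow1.
have hk' : k < b.+2 by move: hk; rewrite /=.
rewrite alpha_b //.
have -> : S b.+2 k = 0.
  rewrite /S big_nat_cond big1 // => i /andP [/andP [hi _] _].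
  apply: divn_small; apply: (leq_trans hk'); rewrite -[X in X <= _]expn1 leq_pexp2l //.
by [].
Qed.

Lemma tprod_eq T f s : fin_support T f s -> tprod T f = \prod_(b <- s) f b.
Proof.
rewrite /tprod => hs; case: excluded_middle_informative => [H|H]; last first.
  by exfalso; apply: H; exists s.
case: (constructive_indefinite_description _ H) => s' hs' /=.
have split1 : forall r : seq nat, \prod_(b <- r) f b = \prod_(b <- r | f b != 1) f b.
  move=> r; rewrite [LHS](bigID (fun b => f b != 1)) /= [X in _ * X]big1 ?muln1 //.
  by move=> b /negPn /eqP.
rewrite (split1 s') (split1 s) -(big_filter s') -(big_filter s).
apply: perm_big; apply: uniq_perm.
- by apply: filter_uniq; case: hs'.
- by apply: filter_uniq; case: hs.
move=> b; rewrite !mem_filter; case hb: (f b != 1) => //=.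
case: hs => _ [h1 h2]; case: hs' => _ [h1' h2'].
apply/idP/idP => hin.
  by apply: h2; [apply: h1' | apply/eqP].
by apply: h2'; [apply: h1 | apply/eqP].
Qed.

Theorem theorem7p2 :
  (forall b k : nat, (2 <= b)%N ->
     alpha setZ b k = Some (\sum_(1 <= i < k.+1) k %/ b ^ i)%N) /\
  (forall k : nat,
     genfact setZ setN k = (\prod_(2 <= b < k.+1) epow b (alpha setZ b k))%N).
Proof.
split; first by move=> b k hb; exact: alpha_b.
move=> k.
have hs : fin_support setN (fun b => epow b (alpha setZ b k)) (index_iota 2 k.+1).
  split; first exact: iota_uniq.
  split; first by [].
  move=> b _ hf; rewrite mem_index_iota.
  apply/negPn/negP => hn; apply: hf; apply: f_one.
  by move: hn; rewrite negb_and -ltnNge -leqNgt.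
exact: (tprod_eq hs).
Qed.
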